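(* Run the UCB-like policy described in the context, with switch budget $L$ (so that $q=q(L,K)=\lfloor (L-N)/(K+1)\rfloor\ge 1$). Then the number of assortment switches $\Psi_T=\sum_{t}\mathbb{I}[S_t\neq S_{t+1}]$ made by the policy is at most $L$.
   Context: Setting: $N$ products $\mathcal N=\{1,\dots,N\}$, a no-purchase option $0$, $K$ resources $\mathcal K=\{1,\dots,K\}$, horizon of $T$ periods. Product $i$ gives revenue $r(i)\in[0,1]$ and consumes $a(i,k)\in[0,1]$ units of resource $k$; $r(0)=a(0,k)=0$. Resource $k$ has initial inventory $Tc(k)$, $c(k)>0$. For $v\in\mathbb R_{>0}^N$ and $S\subseteq\mathcal N$ the MNL probabilities are $\varphi(i,S\mid v)=v_i/(1+\sum_{j\in S}v_j)$ for $i\in S$, $\varphi(0,S\mid v)=1/(1+\sum_{j\in S}v_j)$, $\varphi(i,S\mid v)=0$ for $i\in\mathcal N\setminus S$. The unknown true vector $v^*$ satisfies $v_i^*\in[1/R,R]$. In period $t$ the retailer offers $S_t\subseteq\mathcal N$ and the customer chooses $I_t\in S_t\cup\{0\}$ with conditional probability $\varphi(I_t,S_t\mid v^* )$ given the past. UCB-like policy: parameters $\tau$ (a multiple of $N$), $L$, $\delta\in(0,1)$, $q=\lfloor (L-N)/(K+1)\rfloor$; $\Psi=\frac{R(1+NR)^2}{2}\sqrt{2+4\log\frac{2T^{1/2}q(K+1)N}{\delta}}$, $\varepsilon(n)=(\sqrt N+1)\Psi/\sqrt n$, $\omega=\frac{1}{T\min_k c(k)}\Big(4(\sqrt N+1)\sqrt{1+\frac{NT}{\tau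 q}}\Psi\sqrt{N^2T}+\sqrt{2T\log\frac{4(K+1)}{\delta}}+\frac{2N^2\Psi}{\sqrt\tau}\sqrt{2T\log\frac{4(K+1)}{\delta}}+\tau\Big)$. Warm start: for $i=1,\dots,N$ offer $S_t=\{i\}$ for $t=(i-1)\tau/N+1,\dots,i\tau/N$. Let $T_0=\tau$, $T_\ell=\ell\lfloor (T-\tau)/q\rfloor+\tau$ for $\ell=1,\dots,q$. In epoch $\ell$: let $n_i^{\ell-1}=\sum_{t=1}^{T_{\ell-1}}\mathbb I(i\in S_t)$; compute the MLE $\hat v^\ell=e^{\hat\theta}$, $\hat\theta$ minimizing $\mathcal L_{\ell-1}(\theta)=-\sum_{t=1}^{T_{\ell-1}}\big[\theta_{I_t}-\log(1+\sum_{i\in S_t}e^{\theta_i})\big]$ ($\theta_0:=0$); solve the UCB-LP: maximize $\sum_{S\subseteq\mathcal N}\sum_{i\in S}r(i)\big(\varphi(i,S\mid\hat v^\ell)+\varepsilon(n_i^{\ell-1})\big)y(S)$ subject to $\sum_{S}\sum_{i\in S}a(i,k)\big(\varphi(i,S\mid\hat v^\ell)-\varepsilon(n_i^{\ell-1})\big)y(S)\le(1-\omega)c(k)$ for all $k$, $\sum_S y(S)=1$, $y\ge 0$, obtaining a basic optimal solution $y_\ell$ (at most $K+1$ nonzero entries); draw an assortment independently from $y_\ell$ for each period $T_{\ell-1}+1,\dots,T_\ell$, let $N_\ell(S)$ be the number of draws equal to $S$, and offer each $S$ with $N_\ell(S)>0$ for $N_\ell(S)$ consecutive periods, updating inventories;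 stop once a resource is exhausted. *)

(* Defs.v *)
From mathcomp Require Import all_boot all_order all_algebra.
Set Implicit Arguments. Unset Strict Implicit. Unset Printing Implicit Defensive.
Import Order.TTheory GRing.Theory Num.Theory.
Local Open Scope ring_scope.

(* Products are 'I_N (product i of the paper is the ordinal i-1);
   an assortment is a subset {set 'I_N}. *)

Definition switches (N : nat) (s : seq {set 'I_N}) : nat :=
  count (fun p : {set 'I_N} * {set 'I_N} => p.1 != p.2) (zip s (behead s)).

Definition q_of (L N K : nat) : nat := ((L - N) %/ K.+1)%N.

(* Epoch length floor((T - tau)/q), so that T_l = l * epoch_len + tau. *)
Definition epoch_len (T tau q : nat) : nat := ((T - tau) %/ q)%N.

Definition warm_start (N tau : nat) : seq {set 'I_N} :=
  flatten [seq nseq (tau %/ N)%N [set i] | i <- enum 'I_N].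

(* y is a probability vector over assortments with at most K+1 nonzero
   entries (as is any basic optimal solution of the UCB-LP). *)
Definition sparse_distribution (R : numDomainType) (N K : nat)
    (y : {ffun {set 'I_N} -> R}) : Prop :=
  (forall S, (0 <= y S)%R) /\ (\sum_(S : {set 'I_N}) y S = 1)%R /\
  (#|[set S : {set 'I_N} | y S != 0%R]| <= K.+1)%N.

(* A realization of one epoch of length m: the draws give counts cnt S
   (N_l(S)), positive only for S in the support of y, summing to m; each S
   with cnt S > 0 is offered for cnt S consecutive periods, in some order
   ord (a duplicate-free listing of the S with N_l(S) > 0). *)
Definition epoch_realization (R : numDomainType) (N : nat)
    (y : {ffun {set 'I_N} -> R}) (m : nat)
    (ord : seq {set 'I_N}) (cnt : {set 'I_N} -> nat) : Prop :=
  uniq ord /\ (forall S, S \in ord -> (0 < y S)%R /\ (0 < cnt S)%N) /\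
  (\sum_(S <- ord) cnt S)%N = m.

Definition epoch_seq (N : nat) (ord : seq {set 'I_N}) (cnt : {set 'I_N} -> nat)
  : seq {set 'I_N} := flatten [seq nseq (cnt A) A | A <- ord].

Definition policy_seq (N tau q : nat)
    (ord : nat -> seq {set 'I_N}) (cnt : nat -> {set 'I_N} -> nat)
  : seq {set 'I_N} :=
  warm_start N tau ++ flatten [seq epoch_seq (ord l) (cnt l) | l <- iota 1 q].

(* Main.v *)
Require Import Defs.
From mathcomp Require Import all_boot all_order all_algebra.
From mathcomp Require Import zify.
Import Order.TTheory GRing.Theory Num.Theory.
Local Open Scope ring_scope.

Fixpoint sw {T : eqType} (s : seq T) : nat :=
  match s with
  | x :: ((y :: _) as s') => ((x != y) + sw s')%N
  | _ => 0%N
  end.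

Lemma switchesE N (s : seq {set 'I_N}) : switches s = sw s.
Proof.
rewrite /switches; elim: s => [|x [|y s] IH] //=.
by rewrite IH.
Qed.

Lemma sw_cat {T : eqType} (s t : seq T) : (sw (s ++ t) <= sw s + sw t + 1)%N.
Proof.
elim: s => [|x [|y s] IH] /=; first lia.
  clear IH; case: t => [|z t] //=; case: (x != z) => /=; lia.
move: IH => /=; case: (x != y) => /=; lia.
Qed.

Lemma sw_take {T : eqType} n (s : seq T) : (sw (take n s) <= sw s)%N.
Proof.
elim: s n => [|x s IH] [|n] //=.
case: s IH => [|y s] IH; first by case: n.
case: n IH => [|n] IH /=; first lia.
have := IH n.+1; rewrite /=; lia.
Qed.

Lemma sw_nseq {T : eqType} k (x : T) : sw (nseq k x) = 0%N.
Proof. by elim: k => [|[|k] IH] //=; rewrite eqxx. Qed.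

Lemma sw_flatten {T : eqType} (ss : seq (seq T)) b :
  (forall s, s \in ss -> sw s <= b)%N ->
  (sw (flatten ss) <= (size ss * b.+1).-1)%N.
Proof.
elim: ss => [|s ss IH] //= H.
have Hs : (sw s <= b)%N by apply: H; rewrite inE eqxx.
have IH' := IH (fun t Ht => H t (@mem_behead _ (s :: ss) t Ht)).
case: ss IH' {IH H} => [|s' ss] IH'.
  by rewrite /= cats0; lia.
have := sw_cat s (flatten (s' :: ss)).
move: IH' Hs; rewrite /=; move: (sw (s ++ _)) (sw (s' ++ _)) (size ss) (sw s) => Y X m Z; nia.
Qed.

Theorem theorem2 (R : realFieldType) (N K T L tau : nat)
    (y : nat -> {ffun {set 'I_N} -> R})
    (ord : nat -> seq {set 'I_N}) (cnt : nat -> {set 'I_N} -> nat)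
    (n_stop : nat) :
  (0 < N)%N -> (N %| tau)%N ->
  (1 <= q_of L N K)%N ->
  (forall l, (1 <= l <= q_of L N K)%N ->
     sparse_distribution K (y l) /\
     epoch_realization (y l) (epoch_len T tau (q_of L N K)) (ord l) (cnt l)) ->
  (n_stop <= T)%N ->
  (switches (take n_stop (policy_seq tau (q_of L N K) ord cnt)) <= L)%N.
Proof.
move=> N0 _ q1 Hl _.
set q := q_of L N K in q1 Hl *.
rewrite switchesE; apply: leq_trans (sw_take _ _) _.
rewrite /policy_seq; apply: leq_trans (sw_cat _ _) _.
have Hw : (sw (warm_start N tau) <= N.-1)%N.
  have := @sw_flatten _ [seq nseq (tau %/ N)%N [set i] | i <- enum 'I_N] 0.
  rewrite size_map size_enum_ord muln1; apply.
  by move=> s /mapP [i _ ->]; rewrite sw_nseq.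
have He : (sw (flatten [seq epoch_seq (ord l) (cnt l) | l <- iota 1 q])
            <= (q * K.+1).-1)%N.
  have := @sw_flatten _ [seq epoch_seq (ord l) (cnt l) | l <- iota 1 q] K.
  rewrite size_map size_iota; apply.
  move=> s /mapP [l]; rewrite mem_iota => Hlq ->.
  have [[_ [_ Hsupp]] [Hu [Hpos _]]] := Hl l ltac:(lia).
  rewrite /epoch_seq.
  have := @sw_flatten _ [seq nseq (cnt l A) A | A <- ord l] 0.
  rewrite size_map muln1 => Hb.
  have {Hb} Hb : (sw (flatten [seq nseq (cnt l A) A | A <- ord l]) <= (size (ord l)).-1)%N.
    by apply: Hb => t /mapP [A _ ->]; rewrite sw_nseq.
  apply: leq_trans Hb _.
  suff : (size (ord l) <= K.+1)%N by lia.
  move/card_uniqP: Hu => <-.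
  apply: leq_trans Hsupp; apply: subset_leq_card; apply/subsetP => S HS.
  by rewrite inE; have [H1 _] := Hpos S HS; rewrite gt_eqF.
have Hq : (q * K.+1 <= L - N)%N by apply: leq_trunc_div.
lia.
Qed.
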